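(* Let $i\ge1$ and $i+2\le s\le r$, and let $\mathcal H$ be an $s$-graph with $\Delta_i(\mathcal H)\le\binom{r-i}{s-i}$. If $\mathcal H(I)\cong K^{(s-i)}_{r-i}$ for every $I\in\partial_i(\mathcal H)$, then $\mathcal H$ is a packing shadow $\partial_sP(i,r)$, i.e. $\mathcal H=\partial_s(\mathcal A)$ for some $P(i,r)$ $\mathcal A$.
   Context: An $s$-graph is a family of $s$-subsets (edges) of a vertex set $V$. For $|I|=i<s$, $\mathcal H(I)=\{E\setminus I: I\subseteq E\in\mathcal H\}$, an $(s-i)$-graph whose vertex set is the union of its edges; $d_{\mathcal H}(I)$ is the number of edges containing $I$, and $\Delta_i(\mathcal H)=\max_{|I|=i}d_{\mathcal H}(I)$. $\partial_q(\mathcal A)=\bigcup_{A\in\mathcal A}\binom{A}{q}$. $K^{(a)}_b$ is the complete $a$-graph on $b$ vertices. A $P(i,r)$ is a family of $r$-sets any two distinct members of which share fewer than $i$ elements; a packing shadow $\partial_sP(i,r)$ is the $s$-shadow of some $P(i,r)$. *)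

(* Defs.v *)
From mathcomp Require Import all_boot.
Set Implicit Arguments. Unset Strict Implicit. Unset Printing Implicit Defensive.

Definition uniform (T : finType) (s : nat) (H : {set {set T}}) : Prop :=
  forall E, E \in H -> #|E| = s.

Definition link (T : finType) (H : {set {set T}}) (I : {set T}) : {set {set T}} :=
  [set E :\: I | E in [set E in H | I \subset E]].

Definition vtx (T : finType) (F : {set {set T}}) : {set T} := \bigcup_(E in F) E.

Definition deg (T : finType) (H : {set {set T}}) (I : {set T}) : nat :=
  #|[set E in H | I \subset E]|.

Definition maxdeg_le (T : finType) (H : {set {set T}}) (i b : nat) : Prop :=
  forall I : {set T}, #|I| = i -> deg H I <= b.

Definition shadow (T : finType) (q : nat) (A : {set {set T}}) : {set {set T}} :=
  [set S : {set T} | (#|S| == q) && [exists B in A, S \subset B]].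

(* F (with vertex set vtx F) is isomorphic to the complete a-graph K^(a)_b:
   a bijection between vtx F and {0,...,b-1} mapping the edges of F
   exactly onto the a-subsets of 'I_b. *)
Definition iso_complete (T : finType) (F : {set {set T}}) (a b : nat) : Prop :=
  exists f : T -> 'I_b,
    {in vtx F &, injective f} /\ f @: vtx F = [set: 'I_b] /\
    [set f @: (E : {set T}) | E in F] = [set X : {set 'I_b} | #|X| == a].

Definition packing (T : finType) (i r : nat) (A : {set {set T}}) : Prop :=
  (forall B, B \in A -> #|B| = r) /\
  (forall B C, B \in A -> C \in A -> B != C -> #|B :&: C| < i).

(* Main.v *)
Require Import Defs.
From mathcomp Require Import all_boot.
From mathcomp Require Import zify.
Set Implicit Arguments. Unset Strict Implicit. Unset Printing Implicit Defensive.

Lemma linkP (T : finType) (H : {set {set T}}) (I Y : {set T}) :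
  reflect (exists F, [/\ F \in H, I \subset F & Y = F :\: I]) (Y \in link H I).
Proof.
apply: (iffP imsetP).
- by case=> F; rewrite inE => /andP[h1 h2] ->; exists F.
- by case=> F [h1 h2 ->]; exists F; rewrite // inE h1 h2.
Qed.

Lemma vtxP (T : finType) (H : {set {set T}}) (I : {set T}) x :
  reflect (exists F, [/\ F \in H, I \subset F, x \in F & x \notin I])
          (x \in vtx (link H I)).
Proof.
apply: (iffP bigcupP).
- case=> Y /linkP [F [h1 h2 ->]]; rewrite inE => /andP[h4 h3]. by exists F.
- case=> F [h1 h2 h3 h4]; exists (F :\: I); first by apply/linkP; exists F.
  by rewrite inE h3 h4.
Qed.

Lemma vtx_notin (T : finType) (H : {set {set T}}) (I : {set T}) x :
  x \in vtx (link H I) -> x \notin I.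
Proof. by case/vtxP=> F []. Qed.

Lemma imset_inj_eq (T T' : finType) (f : T -> T') (A Y E : {set T}) :
  {in A &, injective f} -> Y \subset A -> E \subset A -> f @: Y = f @: E -> Y = E.
Proof.
move=> inj sY sE eq; apply/setP=> x; apply/idP/idP => hx.
- have : f x \in f @: E by rewrite -eq imset_f.
  case/imsetP=> y hy fxy.
  by rewrite (inj x y (subsetP sY x hx) (subsetP sE y hy) fxy).
- have : f x \in f @: Y by rewrite eq imset_f.
  case/imsetP=> y hy fxy.
  by rewrite (inj x y (subsetP sE x hx) (subsetP sY y hy) fxy).
Qed.

Lemma iso_card (T : finType) (F : {set {set T}}) a b :
  iso_complete F a b -> #|vtx F| = b.
Proof. case=> f [inj [im _]]. by rewrite -(card_in_imset inj) im cardsT card_ord. Qed.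

Lemma iso_full (T : finType) (F : {set {set T}}) a b : iso_complete F a b ->
  forall Y : {set T}, Y \subset vtx F -> #|Y| = a -> Y \in F.
Proof.
case=> f [inj [im ed]] Y sY cY.
have injY : {in Y &, injective f}.
  by move=> x y hx hy; apply: inj; apply: (subsetP sY).
have : f @: Y \in [set X : {set 'I_b} | #|X| == a].
  by rewrite inE (card_in_imset injY) cY.
rewrite -ed => /imsetP [E hE eqE].
have sE : E \subset vtx F by apply: bigcup_sup.
by rewrite (imset_inj_eq inj sY sE eqE).
Qed.

Lemma extend_subset (T : finType) (Z V : {set T}) k :
  Z \subset V -> #|Z| <= k -> k <= #|V| ->
  exists Y : {set T}, [/\ Z \subset Y, Y \subset V & #|Y| = k].
Proof.
move=> sZ hk hkV.
have [n hn] : exists n, k = #|Z| + n by exists (k - #|Z|); lia.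
elim: n Z sZ hk hn => [|n IH] Z sZ hk hn.
  by exists Z; rewrite addn0 in hn; split.
case: (set_0Vmem (V :\: Z)) => [/eqP|[x hx]].
  by rewrite setD_eq0 => /subset_leq_card; lia.
move: hx; rewrite inE => /andP[hxZ hxV].
have [Y [h1 h2 h3]] : exists Y : {set T}, [/\ x |: Z \subset Y, Y \subset V & #|Y| = k].
  apply: IH.
  - by rewrite subUset sub1set hxV sZ.
  - by rewrite cardsU1 hxZ; lia.
  - by rewrite cardsU1 hxZ; lia.
exists Y; split => //.
by apply: subset_trans h1; apply: subsetUr.
Qed.

Definition Sset (T : finType) (H : {set {set T}}) (I : {set T}) := I :|: vtx (link H I).

Lemma disj_card (T : finType) (H : {set {set T}}) (I Y : {set T}) :
  Y \subset vtx (link H I) -> #|I :|: Y| = #|I| + #|Y|.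
Proof.
move=> sY.
have h0 : I :&: Y = set0.
  apply/setP=> x; rewrite !inE; apply/negP => /andP[hI hY].
  by move: (vtx_notin (subsetP sY x hY)); rewrite hI.
by rewrite cardsU h0 cards0 subn0.
Qed.

Lemma shadowP (T : finType) i (H : {set {set T}}) (I : {set T}) :
  reflect (#|I| = i /\ exists2 B, B \in H & I \subset B) (I \in shadow i H).
Proof.
rewrite inE; apply: (iffP andP).
- by case=> /eqP h /exists_inP [B hB hIB]; split => //; exists B.
- by case=> h [B hB hIB]; split; [apply/eqP | apply/exists_inP; exists B].
Qed.

Lemma Sset_card (T : finType) i s r (H : {set {set T}}) (I : {set T}) :
  i <= r ->
  (forall I : {set T}, I \in shadow i H -> iso_complete (link H I) (s - i) (r - i)) ->
  I \in shadow i H -> #|Sset H I| = r.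
Proof.
move=> hir hiso hI; have [ci _] := shadowP _ _ _ hI.
rewrite /Sset (disj_card (subxx _)) ci (iso_card (hiso _ hI)); lia.
Qed.

Lemma edge_in_S (T : finType) (H : {set {set T}}) (I F : {set T}) :
  F \in H -> I \subset F -> F \subset Sset H I.
Proof.
move=> hF hIF; apply/subsetP=> x hx; rewrite inE.
case hxI: (x \in I) => //=.
by apply/vtxP; exists F; rewrite hxI.
Qed.

Lemma S_edge (T : finType) i s r (H : {set {set T}}) (I X : {set T}) :
  i <= s ->
  (forall I : {set T}, I \in shadow i H -> iso_complete (link H I) (s - i) (r - i)) ->
  I \in shadow i H -> X \subset Sset H I -> I \subset X -> #|X| = s -> X \in H.
Proof.
move=> his hiso hI sX hIX cX; have [ci _] := shadowP _ _ _ hI.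
have sD : X :\: I \subset vtx (link H I).
  apply/subsetP=> x; rewrite inE => /andP[hxI hxX].
  by move: (subsetP sX x hxX); rewrite inE (negbTE hxI).
have cD : #|X :\: I| = s - i.
  by rewrite cardsD (setIidPr hIX) cX ci.
have [F [hF hIF eqF]] := linkP _ _ _ (iso_full (hiso _ hI) sD cD).
by rewrite -(setID X I) (setIidPr hIX) eqF -{1}(setIidPr hIF) setID.
Qed.

Lemma step (T : finType) i s r (H : {set {set T}}) (I : {set T}) a b :
  1 <= i -> i + 2 <= s -> s <= r ->
  (forall I : {set T}, I \in shadow i H -> iso_complete (link H I) (s - i) (r - i)) ->
  I \in shadow i H -> a \in I -> b \in vtx (link H I) ->
  (b |: (I :\ a)) \in shadow i H /\ Sset H (b |: (I :\ a)) = Sset H I.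
Proof.
move=> hi1 his hsr hiso hI haI hbV.
have [ci _] := shadowP _ _ _ hI.
set V := vtx (link H I).
have cV : #|V| = r - i := iso_card (hiso _ hI).
have hbI : b \notin I := vtx_notin hbV.
have mkF : forall x, exists F, [/\ F \in H, b |: (I :\ a) \subset F &
                                 (x \in Sset H I -> x \in F)].
  move=> x.
  have c2 : #|[set b; x] :&: V| <= s - i.
    apply: leq_trans (subset_leq_card (subsetIl _ _)) _.
    rewrite cards2; case: (b != x) => /=; lia.
  have [Y [h1 h2 h3]] := extend_subset (subsetIr [set b; x] V) c2 (ltac:(lia) : s - i <= #|V|).
  exists (I :|: Y); split.
  - apply: (S_edge (r := r) _ hiso hI) => //; first by lia.
    + by rewrite /Sset setUS.
    + exact: subsetUl.
    + by rewrite (disj_card h2) ci h3; lia.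
  - rewrite subUset sub1set; apply/andP; split.
      by apply/setUP; right; apply: (subsetP h1); rewrite !inE eqxx hbV.
    by apply: subset_trans (subsetDl _ _) (subsetUl _ _).
  - rewrite /Sset inE => /orP [hx|hx]; apply/setUP; [by left|right].
    by apply: (subsetP h1); rewrite !inE eqxx orbT hx.
have hI' : b |: (I :\ a) \in shadow i H.
  have [F [hF hsub _]] := mkF b.
  apply/shadowP; split; last by exists F.
  rewrite cardsU1 !inE negb_and hbI orbT /=.
  move: (cardsD1 a I); rewrite haI ci; lia.
split => //.
apply/esym/eqP; rewrite eqEcard.
rewrite (Sset_card (s := s) _ hiso hI') ?(Sset_card (s := s) _ hiso hI) ?leqnn ?andbT; try lia.
apply/subsetP=> x hx.
case hx': (x \in b |: (I :\ a)); first by rewrite inE hx'.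
have [F [hF hsub hxF]] := mkF x.
rewrite inE hx' /=; apply/vtxP; exists F; split => //; first by apply: hxF.
by rewrite hx'.
Qed.

Lemma general (T : finType) i s r (H : {set {set T}}) :
  1 <= i -> i + 2 <= s -> s <= r ->
  (forall I : {set T}, I \in shadow i H -> iso_complete (link H I) (s - i) (r - i)) ->
  forall n (I J : {set T}), I \in shadow i H -> #|J| = i -> J \subset Sset H I ->
  #|J :\: I| = n -> J \in shadow i H /\ Sset H J = Sset H I.
Proof.
move=> hi1 his hsr hiso n; elim: n => [|n IH] I J hI cJ sJ cD.
  have [ci _] := shadowP _ _ _ hI.
  move/eqP: cD; rewrite cards_eq0 setD_eq0 => sJI.
  have -> : J = I by apply/eqP; rewrite eqEcard sJI ci cJ leqnn.
  by [].
have [ci _] := shadowP _ _ _ hI.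
have : 0 < #|J :\: I| by rewrite cD.
rewrite card_gt0 => /set0Pn [b]; rewrite inE => /andP [hbI hbJ].
have : 0 < #|I :\: J| by rewrite cardsD setIC; move: (cardsD J I); rewrite cD ci cJ; lia.
rewrite card_gt0 => /set0Pn [a]; rewrite inE => /andP [haJ haI].
have hbV : b \in vtx (link H I).
  by move: (subsetP sJ b hbJ); rewrite inE (negbTE hbI).
have [hI' eS] := step hi1 his hsr hiso hI haI hbV.
have [hJ eJ] : J \in shadow i H /\ Sset H J = Sset H (b |: (I :\ a)).
  apply: IH => //; first by rewrite eS.
  have -> : J :\: (b |: (I :\ a)) = (J :\: I) :\ b.
    apply/setP=> x; rewrite !inE.
    case: (eqVneq x a) => [->|_]; first by rewrite (negbTE haJ) !andbF.
    by rewrite /= negb_or andbA.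
  by move: (cardsD1 b (J :\: I)); rewrite inE hbI hbJ cD; lia.
by split => //; rewrite eJ eS.
Qed.

Theorem mainTheorem13 (T : finType) (i s r : nat) (H : {set {set T}}) :
  1 <= i -> i + 2 <= s -> s <= r ->
  uniform s H ->
  maxdeg_le H i 'C(r - i, s - i) ->
  (forall I : {set T}, I \in shadow i H -> iso_complete (link H I) (s - i) (r - i)) ->
  exists A : {set {set T}}, packing i r A /\ H = shadow s A.
Proof.
move=> hi1 his hsr hunif _ hiso.
have gen := general hi1 his hsr hiso.
have gen' : forall I J : {set T}, I \in shadow i H -> #|J| = i -> J \subset Sset H I ->
    J \in shadow i H /\ Sset H J = Sset H I.
  by move=> I J hI cJ sJ; apply: (gen _ I J hI cJ sJ erefl).
have scard : forall I, I \in shadow i H -> #|Sset H I| = r.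
  by move=> I hI; apply: (Sset_card (s := s) _ hiso hI); lia.
exists [set Sset H I | I in shadow i H]; split; first split.
- by move=> B /imsetP [I hI ->]; apply: scard.
- move=> B C /imsetP [I hI ->] /imsetP [I' hI' ->] hne.
  rewrite ltnNge; apply/negP => hge.
  have [J [_ hJ cJ]] := extend_subset (sub0set (Sset H I :&: Sset H I')) (ltac:(rewrite cards0; lia) : #|@set0 T| <= i) hge.
  have [_ e1] := gen' I J hI cJ (subset_trans hJ (subsetIl _ _)).
  have [_ e2] := gen' I' J hI' cJ (subset_trans hJ (subsetIr _ _)).
  by move: hne; rewrite -e1 -e2 eqxx.
- apply/setP => X; apply/idP/idP => hX.
  + have cX := hunif X hX.
    have [J [_ hJ cJ]] := extend_subset (sub0set X) (ltac:(rewrite cards0; lia) : #|@set0 T| <= i) (ltac:(lia) : i <= #|X|).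
    have hJs : J \in shadow i H by apply/shadowP; split => //; exists X.
    rewrite inE cX eqxx /=; apply/exists_inP; exists (Sset H J).
      by apply: imset_f.
    exact: edge_in_S.
  + move: hX; rewrite inE => /andP [/eqP cX /exists_inP [B /imsetP [I hI ->] sX]].
    have [J [_ hJ cJ]] := extend_subset (sub0set X) (ltac:(rewrite cards0; lia) : #|@set0 T| <= i) (ltac:(lia) : i <= #|X|).
    have [hJs eJ] := gen' I J hI cJ (subset_trans hJ sX).
    apply: (S_edge (r := r) _ hiso hJs) => //; first lia.
    by rewrite eJ.
Qed.
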